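(* Let $N(T)$ be a $C^0$ net on a grid $T$ having the BMSDD property with constant $L$. Then the piecewise Coons patch $\mathcal{C}(N):\mathbb{R}^2\to\mathbb{R}^m$ has the BMSDD property with constant $3L$ in $\mathbb{R}^2$.
   Context: For strictly increasing bi-infinite real sequences $(s_i)$, $(t_j)$, unbounded above and below, the grid is $T=\bigcup_i\{s_i\}\times\mathbb{R}\cup\bigcup_j\mathbb{R}\times\{t_j\}$. A net $N(T)$ is a function on $T$ with values in $\mathbb{R}^m$; it is $C^0$ if all u-functions $s\mapsto N(s,t_j)$, $t\mapsto N(s_i,t)$ are continuous. The piecewise Coons patch is defined on each rectangle $[s_i,s_{i+1}]\times[t_j,t_{j+1}]$, with $h_1=s_{i+1}-s_i$, $h_2=t_{j+1}-t_j$, by $\mathcal{C}(N)(s,t)=\frac{s_{i+1}-s}{h_1}N(s_i,t)+\frac{s-s_i}{h_1}N(s_{i+1},t)+\frac{t_{j+1}-t}{h_2}N(s,t_j)+\frac{t-t_j}{h_2}N(s,t_{j+1})-B(s,t)$, with $B(s,t)=\frac{s_{i+1}-s}{h_1}\big(\frac{t_{j+1}-t}{h_2}N(s_i,t_j)+\frac{t-t_j}{h_2}N(s_i,t_{j+1})\big)+\frac{s-s_i}{h_1}\big(\frac{t_{j+1}-t}{h_2}N(s_{i+1},t_j)+\frac{t-t_j}{h_2}N(s_{i+1},t_{j+1})\big)$. For $\sigma_1\ne\sigma_2$, $\tau_1\ne\tau_2$, $[\sigma_1,\sigma_2;\tau_1,\tau_2]G=\frac{G(\sigma_1,\tau_1)+G(\sigma_2,\tau_2)-G(\sigma_2,\tau_1)-G(\sigma_1,\tau_2)}{(\sigma_1-\sigma_2)(\tau_1-\tau_2)}$.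 A net $N(T)$ has the BMSDD property with constant $L$ if $\|[\sigma_1,\sigma_2;\tau_1,\tau_2]N\|_\infty\le L$ whenever all four points $(\sigma_i,\tau_j)$ lie in $T$; a function $G$ on $\mathbb{R}^2$ has the BMSDD property with constant $L$ in $\mathbb{R}^2$ if this bound holds for all $\sigma_1\ne\sigma_2$, $\tau_1\ne\tau_2$. *)

(* Defs.v *)
From Stdlib Require Import Reals ZArith.
Open Scope R_scope.

(* Vectors of R^m are represented as functions nat -> R, of which only the
   coordinates k < m are relevant. *)
Definition vecR := nat -> R.

Definition supnorm_le (m : nat) (v : vecR) (L : R) : Prop :=
  forall k : nat, (k < m)%nat -> Rabs (v k) <= L.

Definition grid_seq (s : Z -> R) : Prop :=
  (forall i j : Z, (i < j)%Z -> s i < s j) /\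
  (forall M : R, exists i : Z, M < s i) /\
  (forall M : R, exists i : Z, s i < M).

Definition onT (s t : Z -> R) (x y : R) : Prop :=
  (exists i : Z, x = s i) \/ (exists j : Z, y = t j).

(* A net is a function R -> R -> R^m, of which only the values on T matter. *)
Definition net := R -> R -> vecR.

Definition net_C0 (m : nat) (s t : Z -> R) (N : net) : Prop :=
  (forall (j : Z) (k : nat), (k < m)%nat -> continuity (fun x => N x (t j) k)) /\
  (forall (i : Z) (k : nat), (k < m)%nat -> continuity (fun y => N (s i) y k)).

Definition divdiff (G : net) (s1 s2 t1 t2 : R) : vecR :=
  fun k => (G s1 t1 k + G s2 t2 k - G s2 t1 k - G s1 t2 k) / ((s1 - s2) * (t1 - t2)).

Definition BMSDD_net (m : nat) (s t : Z -> R) (N : net) (L : R) : Prop :=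
  forall s1 s2 t1 t2 : R, s1 <> s2 -> t1 <> t2 ->
    onT s t s1 t1 -> onT s t s1 t2 -> onT s t s2 t1 -> onT s t s2 t2 ->
    supnorm_le m (divdiff N s1 s2 t1 t2) L.

Definition BMSDD_R2 (m : nat) (G : net) (L : R) : Prop :=
  forall s1 s2 t1 t2 : R, s1 <> s2 -> t1 <> t2 ->
    supnorm_le m (divdiff G s1 s2 t1 t2) L.

Definition coons_cell (s t : Z -> R) (N : net) (i j : Z) (x y : R) : vecR :=
  let h1 := s (i + 1)%Z - s i in
  let h2 := t (j + 1)%Z - t j in
  let a0 := (s (i + 1)%Z - x) / h1 in
  let a1 := (x - s i) / h1 in
  let b0 := (t (j + 1)%Z - y) / h2 in
  let b1 := (y - t j) / h2 in
  fun k =>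
    a0 * N (s i) y k + a1 * N (s (i + 1)%Z) y k
    + b0 * N x (t j) k + b1 * N x (t (j + 1)%Z) k
    - (a0 * (b0 * N (s i) (t j) k + b1 * N (s i) (t (j + 1)%Z) k)
       + a1 * (b0 * N (s (i + 1)%Z) (t j) k + b1 * N (s (i + 1)%Z) (t (j + 1)%Z) k)).

(* G is the piecewise Coons patch C(N): on every closed cell it is given by the
   cell formula (the cell formulas agree on shared edges, so this determines G). *)
Definition is_coons_patch (s t : Z -> R) (N : net) (G : net) : Prop :=
  forall (i j : Z) (x y : R),
    s i <= x <= s (i + 1)%Z -> t j <= y <= t (j + 1)%Z ->
    forall k : nat, G x y k = coons_cell s t N i j x y k.

(* Main.v *)
Require Import Defs.
From Stdlib Require Import Reals ZArith.
From Stdlib Require Import Lra Lia.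
Open Scope R_scope.

Definition Dd (G : net) (a b c d : R) (k : nat) : R :=
  G a c k + G b d k - G b c k - G a d k.

Lemma subdiv (s : Z -> R) (Q : R -> R -> Prop) :
  grid_seq s ->
  (forall a b c, a <= b -> b <= c -> Q a b -> Q b c -> Q a c) ->
  (forall i a b, s i <= a -> a <= b -> b <= s (i+1)%Z -> Q a b) ->
  forall a b, a <= b -> Q a b.
Proof.
  intros [Hmono [Hup Hdown]] Htr Hcell.
  assert (Hind: forall n i a b, s i <= a -> a <= b ->
            b <= s (i + Z.of_nat n + 1)%Z -> Q a b).
  { induction n as [|n IH]; intros i a b H1 H2 H3.
    - replace (i + Z.of_nat 0 + 1)%Z with (i+1)%Z in H3 by lia. eauto.
    - destruct (Rle_dec (s (i+1)%Z) a) as [Ha|Ha].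
      + apply (IH (i+1)%Z); auto.
        replace (i + 1 + Z.of_nat n + 1)%Z with (i + Z.of_nat (S n) + 1)%Z by lia. exact H3.
      + destruct (Rle_dec b (s (i+1)%Z)) as [Hb|Hb].
        * eauto.
        * apply Htr with (s (i+1)%Z); try lra.
          -- apply Hcell with i; lra.
          -- apply (IH (i+1)%Z); try lra.
             replace (i + 1 + Z.of_nat n + 1)%Z with (i + Z.of_nat (S n) + 1)%Z by lia. exact H3. }
  intros a b Hab.
  destruct (Hdown a) as [i Hi]. destruct (Hup b) as [j Hj].
  assert (Hij: (i < j)%Z).
  { destruct (Z_lt_le_dec i j) as [|Hle]; auto. exfalso.
    destruct (Z.eq_dec i j) as [e|ne]. subst; lra.
    assert (s j < s i) by (apply Hmono; lia). lra. }
  apply (Hind (Z.to_nat (j - i - 1)) i a b); try lra.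
  replace (i + Z.of_nat (Z.to_nat (j - i - 1)) + 1)%Z with j by lia. lra.
Qed.

Theorem theorem3 (m : nat) (s t : Z -> R) (N : net) (L : R) (G : net) :
  grid_seq s -> grid_seq t ->
  net_C0 m s t N ->
  BMSDD_net m s t N L ->
  is_coons_patch s t N G ->
  BMSDD_R2 m G (3 * L).
Proof.
  intros Hs Ht _ HN HG.
  assert (Hcell: forall i j a b c d k, (k < m)%nat -> s i <= a -> a <= b -> b <= s (i+1)%Z ->
     t j <= c -> c <= d -> d <= t (j+1)%Z ->
     Rabs (Dd G a b c d k) <= 3 * L * ((b - a) * (d - c))).
  { intros i j a b c d k Hk H1 H2 H3 H4 H5 H6.
    destruct (Req_dec a b) as [e|nab].
    { subst b. unfold Dd.
      replace (G a c k + G a d k - G a c k - G a d k) with 0 by ring.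
      replace (3 * L * ((a - a) * (d - c))) with 0 by ring. rewrite Rabs_R0; lra. }
    destruct (Req_dec c d) as [e|ncd].
    { subst d. unfold Dd.
      replace (G a c k + G b c k - G b c k - G a c k) with 0 by ring.
      replace (3 * L * ((b - a) * (c - c))) with 0 by ring. rewrite Rabs_R0; lra. }
    assert (hi : s i < s (i+1)%Z) by (apply (proj1 Hs); lia).
    assert (hj : t j < t (j+1)%Z) by (apply (proj1 Ht); lia).
    unfold Dd.
    rewrite (HG i j a c), (HG i j b d), (HG i j b c), (HG i j a d); try lra.
    set (X1 := divdiff N (s i) (s (i+1)%Z) c d k).
    set (X2 := divdiff N a b (t j) (t (j+1)%Z) k).
    set (X3 := divdiff N (s i) (s (i+1)%Z) (t j) (t (j+1)%Z) k).
    assert (E : coons_cell s t N i j a c k + coons_cell s t N i j b d k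
                - coons_cell s t N i j b c k - coons_cell s t N i j a d k
                = (b - a) * (d - c) * (X1 + X2 - X3)).
    { unfold X1, X2, X3, coons_cell, divdiff. cbv zeta.
      field. repeat split; lra. }
    rewrite E.
    assert (B1 : Rabs X1 <= L).
    { refine (HN (s i) (s (i+1)%Z) c d _ _ _ _ _ _ k Hk); try lra; unfold onT; left; eauto. }
    assert (B2 : Rabs X2 <= L).
    { refine (HN a b (t j) (t (j+1)%Z) _ _ _ _ _ _ k Hk); try lra; unfold onT; right; eauto. }
    assert (B3 : Rabs X3 <= L).
    { refine (HN (s i) (s (i+1)%Z) (t j) (t (j+1)%Z) _ _ _ _ _ _ k Hk); try lra; unfold onT; left; eauto. }
    assert (B : Rabs (X1 + X2 - X3) <= 3 * L).
    { unfold Rminus. eapply Rle_trans; [apply Rabs_triang|].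
      eapply Rle_trans; [apply Rplus_le_compat_r; apply Rabs_triang|].
      rewrite Rabs_Ropp. lra. }
    rewrite Rabs_mult, (Rabs_pos_eq ((b - a) * (d - c))) by (apply Rmult_le_pos; lra).
    rewrite (Rmult_comm (3 * L)). apply Rmult_le_compat_l; auto.
    apply Rmult_le_pos; lra. }
  assert (H: forall k, (k < m)%nat -> forall a b, a <= b -> forall c d, c <= d ->
             Rabs (Dd G a b c d k) <= 3 * L * ((b - a) * (d - c))).
  { intros k Hk.
    apply (subdiv s (fun a b => forall c d, c <= d ->
             Rabs (Dd G a b c d k) <= 3 * L * ((b - a) * (d - c)))); auto.
    - intros a b e Hab Hbe Q1 Q2 c d Hcd.
      replace (Dd G a e c d k) with (Dd G a b c d k + Dd G b e c d k) by (unfold Dd; ring).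
      eapply Rle_trans; [apply Rabs_triang|].
      replace (3 * L * ((e - a) * (d - c))) with
        (3 * L * ((b - a) * (d - c)) + 3 * L * ((e - b) * (d - c))) by ring.
      apply Rplus_le_compat; auto.
    - intros i a b H1 H2 H3.
      apply (subdiv t (fun c d => Rabs (Dd G a b c d k) <= 3 * L * ((b - a) * (d - c)))); auto.
      + intros c d e Hcd Hde Q1 Q2.
        replace (Dd G a b c e k) with (Dd G a b c d k + Dd G a b d e k) by (unfold Dd; ring).
        eapply Rle_trans; [apply Rabs_triang|].
        replace (3 * L * ((b - a) * (e - c))) with
          (3 * L * ((b - a) * (d - c)) + 3 * L * ((b - a) * (e - d))) by ring.
        apply Rplus_le_compat; auto.
      + intros j c d H4 H5 H6. apply (Hcell i j); auto. }
  intros s1 s2 t1 t2 Hs12 Ht12 k Hk. unfold divdiff.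
  change (G s1 t1 k + G s2 t2 k - G s2 t1 k - G s1 t2 k) with (Dd G s1 s2 t1 t2 k).
  assert (Dgen : Rabs (Dd G s1 s2 t1 t2 k) <= 3 * L * (Rabs (s1 - s2) * Rabs (t1 - t2))).
  { destruct (Rle_dec s1 s2), (Rle_dec t1 t2).
    - rewrite (Rabs_minus_sym s1), (Rabs_minus_sym t1), (Rabs_pos_eq (s2 - s1)), (Rabs_pos_eq (t2 - t1)) by lra. auto.
    - replace (Dd G s1 s2 t1 t2 k) with (- Dd G s1 s2 t2 t1 k) by (unfold Dd; ring).
      rewrite Rabs_Ropp.
      rewrite (Rabs_minus_sym s1), (Rabs_pos_eq (s2 - s1)), (Rabs_pos_eq (t1 - t2)) by lra. apply H; auto; lra.
    - replace (Dd G s1 s2 t1 t2 k) with (- Dd G s2 s1 t1 t2 k) by (unfold Dd; ring).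
      rewrite Rabs_Ropp.
      rewrite (Rabs_minus_sym t1), (Rabs_pos_eq (s1 - s2)), (Rabs_pos_eq (t2 - t1)) by lra. apply H; auto; lra.
    - replace (Dd G s1 s2 t1 t2 k) with (Dd G s2 s1 t2 t1 k) by (unfold Dd; ring).
      rewrite (Rabs_pos_eq (s1 - s2)), (Rabs_pos_eq (t1 - t2)) by lra. apply H; auto; lra. }
  assert (P1 : 0 < Rabs (s1 - s2)) by (apply Rabs_pos_lt; lra).
  assert (P2 : 0 < Rabs (t1 - t2)) by (apply Rabs_pos_lt; lra).
  unfold Rdiv. rewrite Rabs_mult, Rabs_inv, Rabs_mult.
  apply Rmult_le_reg_r with (Rabs (s1 - s2) * Rabs (t1 - t2)).
  { apply Rmult_lt_0_compat; auto. }
  rewrite Rmult_assoc, Rinv_l by (apply Rgt_not_eq, Rmult_lt_0_compat; auto).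
  lra.
Qed.
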